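(* Let $X=(X_1,X_2,X_3,X_4)$ be a random vector of binary random variables, each taking values in $\{1,2\}$, and read indices cyclically modulo $4$, so that the neighboring pairs are $(X_1,X_2),(X_2,X_3),(X_3,X_4),(X_4,X_1)$. Then $X$ satisfies both conditional independence statements $X_1 \perp\!\!\!\perp X_3 \mid (X_2,X_4)$ and $X_2 \perp\!\!\!\perp X_4 \mid (X_1,X_3)$ if and only if at least one of the following holds: (1) the joint distribution of $X$ lies in the closure of the graphical model $\mathcal{M}_{C_4}$; (2) there is an index $i$ such that $X_i = X_{i+1}$ almost surely; (3) there is an index $i$ such that $X_i \neq X_{i+1}$ almost surely.
   Context: $C_4$ is the four-cycle graph on vertices $\{1,2,3,4\}$ with edges $\{1,2\},\{2,3\},\{3,4\},\{1,4\}$. The (undirected, discrete) graphical model $\mathcal{M}_{C_4}$ is the set of strictly positive probability distributions $p$ on $\{1,2\}^4$ that factor as $p(x_1,x_2,x_3,x_4)=\psi_{12}(x_1,x_2)\psi_{23}(x_2,x_3)\psi_{34}(x_3,x_4)\psi_{14}(x_1,x_4)$ for some functions $\psi_{ij}$; its closure is taken in the Euclidean topology on the probability simplex. Conditional independence is allowed for distributions with zeros (conditioning only on events of positive probability). *)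

(* Defs.v *)
From mathcomp Require Import all_boot all_order all_algebra.
From mathcomp Require Import reals.
Set Implicit Arguments. Unset Strict Implicit. Unset Printing Implicit Defensive.
Import Order.TTheory GRing.Theory Num.Theory.
Local Open Scope ring_scope.

(* Vertex i+1 of C_4 is represented by (i : 'I_4); the value 1 (resp. 2) of a
   binary variable is represented by 0 (resp. 1) in 'I_2. *)
Definition state := {ffun 'I_4 -> 'I_2}.

Definition v1 : 'I_4 := @Ordinal 4 0 isT.
Definition v2 : 'I_4 := @Ordinal 4 1 isT.
Definition v3 : 'I_4 := @Ordinal 4 2 isT.
Definition v4 : 'I_4 := @Ordinal 4 3 isT.

Section Defs.
Variable R : realType.

Definition is_distr (p : state -> R) : Prop :=
  (forall x, 0 <= p x) /\ \sum_(x : state) p x = 1.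

Definition Pr (p : state -> R) (E : pred state) : R := \sum_(x : state | E x) p x.

Definition cond_indep (p : state -> R) (i j k l : 'I_4) : Prop :=
  forall a b : 'I_2,
    let C := Pr p [pred x : state | (x k == a) && (x l == b)] in
    0 < C ->
    forall u v : 'I_2,
      Pr p [pred x : state | [&& x i == u, x j == v, x k == a & x l == b]] / C =
      (Pr p [pred x : state | [&& x i == u, x k == a & x l == b]] / C) *
      (Pr p [pred x : state | [&& x j == v, x k == a & x l == b]] / C).

Definition in_model_C4 (q : state -> R) : Prop :=
  is_distr q /\ (forall x, 0 < q x) /\
  exists psi12 psi23 psi34 psi14 : 'I_2 -> 'I_2 -> R,
    forall x : state,
      q x = psi12 (x v1) (x v2) * psi23 (x v2) (x v3) *
            psi34 (x v3) (x v4) * psi14 (x v1) (x v4).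

(* Euclidean closure (all norms on the finite-dimensional space agree) *)
Definition in_closure_model_C4 (p : state -> R) : Prop :=
  forall eps : R, 0 < eps ->
    exists q : state -> R, in_model_C4 q /\ forall x, `|p x - q x| < eps.

Definition as_equal_next (p : state -> R) (i : 'I_4) : Prop :=
  Pr p [pred x : state | x i != x (ordS i)] = 0.

Definition as_diff_next (p : state -> R) (i : 'I_4) : Prop :=
  Pr p [pred x : state | x i == x (ordS i)] = 0.

End Defs.

(* Main.v *)
Require Import Defs.
From mathcomp Require Import all_boot all_order all_algebra.
From mathcomp Require Import reals.
From mathcomp Require Import ring lra.
From Stdlib Require Import Classical.
Import Order.TTheory GRing.Theory Num.Theory.
Local Open Scope ring_scope.
Set Implicit Arguments. Unset Strict Implicit. Unset Printing Implicit Defensive.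


Definition i0 : 'I_2 := @Ordinal 2 0 isT.
Definition i1 : 'I_2 := @Ordinal 2 1 isT.

Lemma I2P (i : 'I_2) : i = i0 \/ i = i1.
Proof. case: i => [[|[|n]] H] //; [left|right]; by apply/val_inj. Qed.

Definition mk (a b c d : 'I_2) : state :=
  [ffun i : 'I_4 => nth a [:: a; b; c; d] i].

Lemma mk1 a b c d : mk a b c d v1 = a. Proof. by rewrite ffunE. Qed.
Lemma mk2 a b c d : mk a b c d v2 = b. Proof. by rewrite ffunE. Qed.
Lemma mk3 a b c d : mk a b c d v3 = c. Proof. by rewrite ffunE. Qed.
Lemma mk4 a b c d : mk a b c d v4 = d. Proof. by rewrite ffunE. Qed.
Definition mkE := (mk1, mk2, mk3, mk4).

Lemma I4P (i : 'I_4) : i = v1 \/ i = v2 \/ i = v3 \/ i = v4.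
Proof.
case: i => [[|[|[|[|n]]]] H] //;
  [left|right;left|right;right;left|right;right;right]; by apply/val_inj.
Qed.

Lemma state_mk (x : state) : x = mk (x v1) (x v2) (x v3) (x v4).
Proof.
apply/ffunP => i; rewrite ffunE.
by case: (I4P i) => [->|[->|[->|->]]].
Qed.

Lemma eq_mk (x : state) a b c d :
  (x == mk a b c d) = [&& x v1 == a, x v2 == b, x v3 == c & x v4 == d].
Proof.
apply/eqP/idP => [->|/and4P[/eqP h1 /eqP h2 /eqP h3 /eqP h4]].
  by rewrite !mkE !eqxx.
by rewrite (state_mk x) h1 h2 h3 h4.
Qed.

Lemma ordS1 : ordS v1 = v2. Proof. by apply/val_inj. Qed.
Lemma ordS2 : ordS v2 = v3. Proof. by apply/val_inj. Qed.
Lemma ordS3 : ordS v3 = v4. Proof. by apply/val_inj. Qed.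
Lemma ordS4 : ordS v4 = v1. Proof. by apply/val_inj. Qed.

Section S.
Variable R : realType.
Implicit Types p : state -> R.

Lemma Pr_pt p y : Pr p [pred x : state | x == y] = p y.
Proof. by rewrite /Pr big_pred1_eq. Qed.

Lemma Pr_ext p (E F : pred state) : E =1 F -> Pr p E = Pr p F.
Proof. by move=> h; rewrite /Pr; apply: eq_bigl. Qed.

Lemma Pr_split p (E : pred state) (j : 'I_4) :
  Pr p E = Pr p [pred x | E x && (x j == i0)] + Pr p [pred x | E x && (x j == i1)].
Proof.
rewrite /Pr (bigID (fun x : state => x j == i0)) /=; congr (_ + _).
apply: eq_bigl => x /=; case: (E x) => //=.
by case: (I2P (x j)) => ->.
Qed.

Lemma Pr0 p (E : pred state) : (forall x, E x -> p x = 0) -> Pr p E = 0.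
Proof. by move=> h; rewrite /Pr big1. Qed.

Lemma Pr_ge0 p (E : pred state) : (forall x, 0 <= p x) -> 0 <= Pr p E.
Proof. by move=> h; rewrite /Pr sumr_ge0. Qed.

Lemma Pr_eq0 p (E : pred state) : (forall x, 0 <= p x) -> Pr p E = 0 ->
  forall x, E x -> p x = 0.
Proof.
move=> h0 h x Ex; move/eqP: h; rewrite /Pr psumr_eq0 => [/allP H|]; last by move=> *.
by apply/eqP; apply: (implyP (H x _)) => //; rewrite mem_index_enum.
Qed.

End S.


Section S2.
Variable R : realType.
Implicit Types p : state -> R.

Definition P p a b c d := p (mk a b c d).

Lemma rank1_iff (m00 m01 m10 m11 : R) :
  0 <= m00 -> 0 <= m01 -> 0 <= m10 -> 0 <= m11 ->
  let T := m00 + m01 + m10 + m11 in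
  (0 < T ->
    [/\ m00 / T = (m00 + m01) / T * ((m00 + m10) / T),
        m01 / T = (m00 + m01) / T * ((m01 + m11) / T),
        m10 / T = (m10 + m11) / T * ((m00 + m10) / T) &
        m11 / T = (m10 + m11) / T * ((m01 + m11) / T)]) <->
  m00 * m11 = m01 * m10.
Proof.
move=> h0 h1 h2 h3 T; split.
  move=> H; have [Tp|Tn] := ltrP 0 T.
    have [e1 _ _ _] := H Tp.
    have Tn0 : T != 0 by rewrite gt_eqF.
    have e2 : m00 * (m00 + m01 + m10 + m11) = (m00 + m01) * (m00 + m10).
      have := congr1 (fun z => z * T * T) e1.
      rewrite /T in Tn0 *; move=> e.
      have -> : m00 * (m00 + m01 + m10 + m11) =
        m00 / (m00 + m01 + m10 + m11) * (m00 + m01 + m10 + m11) * (m00 + m01 + m10 + m11)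
        by field.
      by rewrite e; field.
    by lra.
  have : m00 = 0 /\ m01 = 0 /\ m10 = 0 /\ m11 = 0 by rewrite /T in Tn; lra.
  by move=> [-> [-> [-> ->]]]; rewrite !mul0r.
move=> d Tp; have Tn0 : T != 0 by rewrite gt_eqF.
have key : forall A B C, A * T = B * C -> A / T = B / T * (C / T).
  move=> A B C e; have -> : A / T = A * T / (T * T) by field.
  by rewrite e; field.
rewrite /T in Tn0 key *.
split; apply: key; nra.
Qed.

Lemma Pr_13 p u v a b :
  Pr p [pred x : state | [&& x v1 == u, x v3 == v, x v2 == a & x v4 == b]] = P p u a v b.
Proof.
rewrite /P -Pr_pt; apply: Pr_ext => x /=; rewrite eq_mk.
by case: (x v1 == u) (x v2 == a) (x v3 == v) (x v4 == b) => [] [] [] [].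
Qed.

Lemma Pr_1 p u a b :
  Pr p [pred x : state | [&& x v1 == u, x v2 == a & x v4 == b]] = P p u a i0 b + P p u a i1 b.
Proof.
rewrite (Pr_split _ _ v3) /P -!Pr_pt; congr (_ + _); apply: Pr_ext => x /=; rewrite eq_mk.
  by case: (x v1 == u) (x v2 == a) (x v3 == i0) (x v4 == b) => [] [] [] [].
by case: (x v1 == u) (x v2 == a) (x v3 == i1) (x v4 == b) => [] [] [] [].
Qed.

Lemma Pr_3 p v a b :
  Pr p [pred x : state | [&& x v3 == v, x v2 == a & x v4 == b]] = P p i0 a v b + P p i1 a v b.
Proof.
rewrite (Pr_split _ _ v1) /P -!Pr_pt; congr (_ + _); apply: Pr_ext => x /=; rewrite eq_mk.
  by case: (x v1 == i0) (x v2 == a) (x v3 == v) (x v4 == b) => [] [] [] [].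
by case: (x v1 == i1) (x v2 == a) (x v3 == v) (x v4 == b) => [] [] [] [].
Qed.

Lemma Pr_24 p a b :
  Pr p [pred x : state | (x v2 == a) && (x v4 == b)] =
  P p i0 a i0 b + P p i0 a i1 b + P p i1 a i0 b + P p i1 a i1 b.
Proof.
rewrite (Pr_split _ _ v1) (Pr_split _ (fun x => _ && _) v3).
rewrite (Pr_split _ (fun x => _ && (x v1 == i1)) v3) /P -!Pr_pt -!addrA; congr (_ + (_ + (_ + _)));
  apply: Pr_ext => x /=; rewrite eq_mk.
- by case: (x v1 == i0) (x v2 == a) (x v3 == i0) (x v4 == b) => [] [] [] [].
- by case: (x v1 == i0) (x v2 == a) (x v3 == i1) (x v4 == b) => [] [] [] [].
- by case: (x v1 == i1) (x v2 == a) (x v3 == i0) (x v4 == b) => [] [] [] [].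
- by case: (x v1 == i1) (x v2 == a) (x v3 == i1) (x v4 == b) => [] [] [] [].
Qed.


Lemma Pr_24b p u v a b :
  Pr p [pred x : state | [&& x v2 == u, x v4 == v, x v1 == a & x v3 == b]] = P p a u b v.
Proof.
rewrite /P -Pr_pt; apply: Pr_ext => x /=; rewrite eq_mk.
by case: (x v1 == a) (x v2 == u) (x v3 == b) (x v4 == v) => [] [] [] [].
Qed.

Lemma Pr_2 p u a b :
  Pr p [pred x : state | [&& x v2 == u, x v1 == a & x v3 == b]] = P p a u b i0 + P p a u b i1.
Proof.
rewrite (Pr_split _ _ v4) /P -!Pr_pt; congr (_ + _); apply: Pr_ext => x /=; rewrite eq_mk.
  by case: (x v1 == a) (x v2 == u) (x v3 == b) (x v4 == i0) => [] [] [] [].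
by case: (x v1 == a) (x v2 == u) (x v3 == b) (x v4 == i1) => [] [] [] [].
Qed.

Lemma Pr_4 p v a b :
  Pr p [pred x : state | [&& x v4 == v, x v1 == a & x v3 == b]] = P p a i0 b v + P p a i1 b v.
Proof.
rewrite (Pr_split _ _ v2) /P -!Pr_pt; congr (_ + _); apply: Pr_ext => x /=; rewrite eq_mk.
  by case: (x v1 == a) (x v2 == i0) (x v3 == b) (x v4 == v) => [] [] [] [].
by case: (x v1 == a) (x v2 == i1) (x v3 == b) (x v4 == v) => [] [] [] [].
Qed.

Lemma Pr_13b p a b :
  Pr p [pred x : state | (x v1 == a) && (x v3 == b)] =
  P p a i0 b i0 + P p a i0 b i1 + P p a i1 b i0 + P p a i1 b i1.
Proof.
rewrite (Pr_split _ _ v2) (Pr_split _ (fun x => _ && _) v4).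
rewrite (Pr_split _ (fun x => _ && (x v2 == i1)) v4) /P -!Pr_pt -!addrA; congr (_ + (_ + (_ + _)));
  apply: Pr_ext => x /=; rewrite eq_mk.
- by case: (x v1 == a) (x v2 == i0) (x v3 == b) (x v4 == i0) => [] [] [] [].
- by case: (x v1 == a) (x v2 == i0) (x v3 == b) (x v4 == i1) => [] [] [] [].
- by case: (x v1 == a) (x v2 == i1) (x v3 == b) (x v4 == i0) => [] [] [] [].
- by case: (x v1 == a) (x v2 == i1) (x v3 == b) (x v4 == i1) => [] [] [] [].
Qed.

Definition det1 p a b := P p i0 a i0 b * P p i1 a i1 b = P p i0 a i1 b * P p i1 a i0 b.
Definition det2 p a b := P p a i0 b i0 * P p a i1 b i1 = P p a i0 b i1 * P p a i1 b i0.

Lemma CI1_det p : (forall x, 0 <= p x) ->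
  cond_indep p v1 v3 v2 v4 <-> forall a b, det1 p a b.
Proof.
move=> h; rewrite /cond_indep; split.
  move=> H a b; apply/(rank1_iff (h _) (h _) (h _) (h _)) => Tp.
  have := H a b; rewrite /= Pr_24 => /(_ Tp) H'.
  by split; [move: (H' i0 i0)|move: (H' i0 i1)|move: (H' i1 i0)|move: (H' i1 i1)];
    rewrite Pr_13 Pr_1 Pr_3.
move=> D a b /=; rewrite Pr_24 => Tp u v; rewrite Pr_13 Pr_1 Pr_3.
have [e00 e01 e10 e11] := (rank1_iff (h _) (h _) (h _) (h _)).2 (D a b) Tp.
by case: (I2P u) => ->; case: (I2P v) => ->.
Qed.

Lemma CI2_det p : (forall x, 0 <= p x) ->
  cond_indep p v2 v4 v1 v3 <-> forall a b, det2 p a b.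
Proof.
move=> h; rewrite /cond_indep; split.
  move=> H a b; apply/(rank1_iff (h _) (h _) (h _) (h _)) => Tp.
  have := H a b; rewrite /= Pr_13b => /(_ Tp) H'.
  by split; [move: (H' i0 i0)|move: (H' i0 i1)|move: (H' i1 i0)|move: (H' i1 i1)];
    rewrite Pr_24b Pr_2 Pr_4.
move=> D a b /=; rewrite Pr_13b => Tp u v; rewrite Pr_24b Pr_2 Pr_4.
have [e00 e01 e10 e11] := (rank1_iff (h _) (h _) (h _) (h _)).2 (D a b) Tp.
by case: (I2P u) => ->; case: (I2P v) => ->.
Qed.

End S2.


Section S3.
Variable R : realType.
Implicit Types p : state -> R.

Lemma card_state : #|{: state}| = 16%N.
Proof. by rewrite card_ffun !card_ord. Qed.

Lemma le_sum1 p x : is_distr p -> p x <= 1.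
Proof.
case=> h0 h1; rewrite -h1 (bigD1 x) //= lerDl.
by apply: sumr_ge0 => y _; apply: h0.
Qed.

Lemma prod3_le (x y z U : R) : 0 <= x -> 0 <= y -> 0 <= z ->
  x <= U -> y <= U -> z <= U -> x * y * z <= U ^+ 3.
Proof.
move=> hx hy hz ux uy uz.
rewrite exprS expr2 mulrA [U * U * U]mulrC mulrA.
have hU : 0 <= U by apply: le_trans ux.
apply: ler_pM => //; first by apply: mulr_ge0.
by apply: ler_pM.
Qed.

Lemma prod4_le (x y z w U : R) : 0 <= x -> 0 <= y -> 0 <= z -> 0 <= w ->
  x <= U -> y <= U -> z <= U -> w <= U -> x * y * z * w <= U ^+ 4.
Proof.
move=> hx hy hz hw ux uy uz uw.
have -> : U ^+ 4 = U ^+ 3 * U by rewrite exprSr.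
apply: ler_pM => //; first by rewrite !mulr_ge0.
exact: prod3_le.
Qed.

Lemma tele4 (a b c d t U : R) : 0 <= a -> 0 <= b -> 0 <= c -> 0 <= d ->
  0 < t -> t <= 1 -> a + 1 <= U -> b + 1 <= U -> c + 1 <= U -> d + 1 <= U ->
  0 <= (a + t) * (b + t) * (c + t) * (d + t) - a * b * c * d <= t * (4 * U ^+ 3).
Proof.
move=> ha hb hc hd ht t1 ua ub uc ud.
have -> : (a + t) * (b + t) * (c + t) * (d + t) - a * b * c * d =
  t * ((b + t) * (c + t) * (d + t) + a * (c + t) * (d + t) + a * b * (d + t) + a * b * c)
  by ring.
have h1 : (b + t) * (c + t) * (d + t) <= U ^+ 3 by apply: prod3_le; lra.
have h2 : a * (c + t) * (d + t) <= U ^+ 3 by apply: prod3_le; lra.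
have h3 : a * b * (d + t) <= U ^+ 3 by apply: prod3_le; lra.
have h4 : a * b * c <= U ^+ 3 by apply: prod3_le; lra.
have g1 : 0 <= (b + t) * (c + t) * (d + t) by rewrite !mulr_ge0 //; lra.
have g2 : 0 <= a * (c + t) * (d + t) by rewrite !mulr_ge0 //; lra.
have g3 : 0 <= a * b * (d + t) by rewrite !mulr_ge0 //; lra.
have g4 : 0 <= a * b * c by rewrite !mulr_ge0.
apply/andP; split; first by rewrite mulr_ge0 //; lra.
by rewrite ler_pM2l //; lra.
Qed.

End S3.

Section W.
Variable R : realType.
Variables (c12 c23 c34 c14 : 'I_2 -> 'I_2 -> R).
Variables (m12 m23 m34 m14 : 'I_2 -> 'I_2 -> nat) (k : nat).

Definition Mw (x : state) : nat :=
  (m12 (x v1) (x v2) + m23 (x v2) (x v3) + m34 (x v3) (x v4) + m14 (x v1) (x v4))%N.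
Definition Cw (x : state) : R :=
  c12 (x v1) (x v2) * c23 (x v2) (x v3) * c34 (x v3) (x v4) * c14 (x v1) (x v4).
Definition Gw (t : R) (x : state) : R :=
  (c12 (x v1) (x v2) + t) * (c23 (x v2) (x v3) + t) *
  (c34 (x v3) (x v4) + t) * (c14 (x v1) (x v4) + t).

Definition Bw : R :=
  \sum_(a : 'I_2) \sum_(b : 'I_2) (c12 a b + c23 a b + c34 a b + c14 a b).

Hypothesis c12_ge0 : forall a b, 0 <= c12 a b.
Hypothesis c23_ge0 : forall a b, 0 <= c23 a b.
Hypothesis c34_ge0 : forall a b, 0 <= c34 a b.
Hypothesis c14_ge0 : forall a b, 0 <= c14 a b.

Lemma sum2 (F : 'I_2 -> R) : \sum_(a : 'I_2) F a = F i0 + F i1.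
Proof.
rewrite (bigD1 i0) //= (bigD1 i1) //= big1 ?addr0 // => i /andP[h0 h1].
by case: (I2P i) h0 h1 => ->; rewrite eqxx.
Qed.

Lemma c_le_B a b :
  [/\ c12 a b <= Bw, c23 a b <= Bw, c34 a b <= Bw & c14 a b <= Bw].
Proof.
rewrite /Bw !sum2.
have := c12_ge0 i0 i0; have := c12_ge0 i0 i1; have := c12_ge0 i1 i0; have := c12_ge0 i1 i1.
have := c23_ge0 i0 i0; have := c23_ge0 i0 i1; have := c23_ge0 i1 i0; have := c23_ge0 i1 i1.
have := c34_ge0 i0 i0; have := c34_ge0 i0 i1; have := c34_ge0 i1 i0; have := c34_ge0 i1 i1.
have := c14_ge0 i0 i0; have := c14_ge0 i0 i1; have := c14_ge0 i1 i0; have := c14_ge0 i1 i1.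
by case: (I2P a) => ->; case: (I2P b) => -> *; split; lra.
Qed.

Lemma Bw_ge0 : 0 <= Bw.
Proof. have [h _ _ _] := c_le_B i0 i0; exact: le_trans (c12_ge0 _ _) h. Qed.

Lemma closure_weights (p : state -> R) :
  is_distr p -> (forall x, (k <= Mw x)%N) ->
  (forall x, p x = if Mw x == k then Cw x else 0) ->
  in_closure_model_C4 p.
Proof.
move=> hd hk hp eps epsp.
set U := Bw + 1.
have U1 : 1 <= U by have := Bw_ge0; rewrite /U; lra.
set K := 4 * U ^+ 4.
have U4 : 1 <= U ^+ 4 by apply: exprn_ege1.
have U34 : U ^+ 3 <= U ^+ 4.
  rewrite [U ^+ 4]exprSr; apply: ler_peMr => //; apply: exprn_ge0; lra.
have Kp : 4 <= K by rewrite /K; lra.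
set t := eps / (64 * K * (1 + eps)).
have tp : 0 < t by rewrite /t divr_gt0 // !mulr_gt0 //; lra.
have tK : t * K = eps / (64 * (1 + eps)).
  rewrite /t; field; apply/andP; split; apply/negP => /eqP; lra.
have tK1 : t * K <= 1 / 64.
  rewrite tK ler_pdivrMr ?mulr_gt0 //; try lra.
have tK2 : t * K <= eps / 64.
  rewrite tK ler_pdivrMr ?mulr_gt0 //; last by lra.
  have -> : eps / 64 * (64 * (1 + eps)) = eps * (1 + eps) by field.
  nra.
have t1 : t <= 1 by nra.
set g := fun x => t ^+ (Mw x - k) * Gw t x.
have Gpos : forall x, 0 < Gw t x.
  by move=> x; rewrite /Gw !mulr_gt0 // ltr_pwDr.
have gpos : forall x, 0 < g x by move=> x; rewrite /g mulr_gt0 // exprn_gt0.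
have claim1 : forall x, `|g x - p x| <= t * K.
  move=> x; rewrite hp /g; case: eqP => hM.
    rewrite hM subnn expr0 mul1r.
    have [a1 _ _ _] := c_le_B (x v1) (x v2).
    have [_ a2 _ _] := c_le_B (x v2) (x v3).
    have [_ _ a3 _] := c_le_B (x v3) (x v4).
    have [_ _ _ a4] := c_le_B (x v1) (x v4).
    have b1 : c12 (x v1) (x v2) + 1 <= U by rewrite /U; lra.
    have b2 : c23 (x v2) (x v3) + 1 <= U by rewrite /U; lra.
    have b3 : c34 (x v3) (x v4) + 1 <= U by rewrite /U; lra.
    have b4 : c14 (x v1) (x v4) + 1 <= U by rewrite /U; lra.
    have /andP[l1 l2] := tele4 (c12_ge0 (x v1) (x v2)) (c23_ge0 (x v2) (x v3))
       (c34_ge0 (x v3) (x v4)) (c14_ge0 (x v1) (x v4)) tp t1 b1 b2 b3 b4.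
    rewrite ger0_norm /Gw /Cw //.
    apply: (le_trans l2); rewrite /K ler_pM2l //; lra.
  have hlt : (0 < Mw x - k)%N by rewrite subn_gt0 ltn_neqAle hk andbT eq_sym; apply/eqP.
  rewrite subr0 ger0_norm; last by apply: ltW; apply: gpos.
  have [a1 _ _ _] := c_le_B (x v1) (x v2).
  have [_ a2 _ _] := c_le_B (x v2) (x v3).
  have [_ _ a3 _] := c_le_B (x v3) (x v4).
  have [_ _ _ a4] := c_le_B (x v1) (x v4).
  have hG : Gw t x <= U ^+ 4.
    have := c12_ge0 (x v1) (x v2); have := c23_ge0 (x v2) (x v3).
    have := c34_ge0 (x v3) (x v4); have := c14_ge0 (x v1) (x v4).
    move=> *; apply: prod4_le; rewrite /U; lra.
  have hT : t ^+ (Mw x - k) <= t.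
    case: (Mw x - k)%N hlt => // n _.
    rewrite exprS; apply: ler_piMr; [exact: ltW | exact: exprn_ile1 (ltW tp) t1].
  have : t ^+ (Mw x - k) * Gw t x <= t * U ^+ 4.
    apply: ler_pM => //; [by rewrite exprn_ge0 // ltW|exact: ltW].
  move=> h; apply: (le_trans h); rewrite /K ler_pM2l //; lra.
set Z := \sum_(x : state) g x.
have hZ : `|Z - 1| <= 16 * (t * K).
  have -> : Z - 1 = \sum_(x : state) (g x - p x).
    by rewrite sumrB; case: hd => _ ->.
  apply: (le_trans (ler_norm_sum _ _ _)).
  apply: (le_trans (ler_sum _ (fun x _ => claim1 x))).
  by rewrite sumr_const card_state mulr_natl.
have Zlo : 3 / 4 <= Z.
  move: hZ; rewrite ler_norml => /andP[h _]; lra.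
have Zp : 0 < Z by lra.
exists (fun x => g x / Z); split; last first.
  move=> x /=; rewrite distrC.
  have px1 := le_sum1 x hd.
  have px0 : 0 <= p x by case: hd.
  have -> : g x / Z - p x = (g x - p x + p x * (1 - Z)) / Z.
    by field; apply/negP => /eqP; lra.
  rewrite normrM normfV (gtr0_norm Zp) ltr_pdivrMr //.
  have e1 : `|g x - p x + p x * (1 - Z)| <= t * K + 16 * (t * K).
    apply: (le_trans (ler_normD _ _)); apply: lerD => //.
    rewrite normrM (ger0_norm px0) -normrN opprB.
    have := normr_ge0 (Z - 1); nra.
  apply: (le_lt_trans e1); nra.
split.
  split; first by move=> x; rewrite divr_ge0 // ltW.
  by rewrite -mulr_suml mulfV // gt_eqF.
split; first by move=> x; rewrite divr_gt0.
exists (fun a b => (c12 a b + t) * t ^+ (m12 a b) / (t ^+ k * Z)).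
exists (fun a b => (c23 a b + t) * t ^+ (m23 a b)).
exists (fun a b => (c34 a b + t) * t ^+ (m34 a b)).
exists (fun a b => (c14 a b + t) * t ^+ (m14 a b)).
move=> x; rewrite /g (exprB (hk x)) ?unitfE ?gt_eqF // /Mw !exprD /Gw.
field; apply/andP; split; rewrite gt_eqF // exprn_gt0 //.
Qed.

End W.


Section S4.
Variable R : realType.
Implicit Types p : state -> R.

Lemma equal_v1_iff p : (forall x, 0 <= p x) ->
  as_equal_next p v1 <-> (forall y z : 'I_2, P p i0 i1 y z = 0 /\ P p i1 i0 y z = 0).
Proof.
move=> h; rewrite /as_equal_next ordS1; split.
  move=> H y z; have Z := Pr_eq0 h H.
  by split; apply: Z; rewrite /= !mkE.
move=> H; apply: Pr0 => x /=; rewrite (state_mk x) !mkE.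
have [h1 h2] := H (x v3) (x v4).
by case: (I2P (x v1)) h1 h2 => ->; case: (I2P (x v2)) => -> //= h1 h2 _;
  rewrite ?h1 ?h2.
Qed.

Lemma diff_v1_iff p : (forall x, 0 <= p x) ->
  as_diff_next p v1 <-> (forall y z : 'I_2, P p i0 i0 y z = 0 /\ P p i1 i1 y z = 0).
Proof.
move=> h; rewrite /as_diff_next ordS1; split.
  move=> H y z; have Z := Pr_eq0 h H.
  by split; apply: Z; rewrite /= !mkE.
move=> H; apply: Pr0 => x /=; rewrite (state_mk x) !mkE.
have [h1 h2] := H (x v3) (x v4).
by case: (I2P (x v1)) h1 h2 => ->; case: (I2P (x v2)) => -> //= h1 h2 _;
  rewrite ?h1 ?h2.
Qed.

Lemma equal_v2_iff p : (forall x, 0 <= p x) ->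
  as_equal_next p v2 <-> (forall y z : 'I_2, P p y i0 i1 z = 0 /\ P p y i1 i0 z = 0).
Proof.
move=> h; rewrite /as_equal_next ordS2; split.
  move=> H y z; have Z := Pr_eq0 h H.
  by split; apply: Z; rewrite /= !mkE.
move=> H; apply: Pr0 => x /=; rewrite (state_mk x) !mkE.
have [h1 h2] := H (x v1) (x v4).
by case: (I2P (x v2)) h1 h2 => ->; case: (I2P (x v3)) => -> //= h1 h2 _;
  rewrite ?h1 ?h2.
Qed.

Lemma diff_v2_iff p : (forall x, 0 <= p x) ->
  as_diff_next p v2 <-> (forall y z : 'I_2, P p y i0 i0 z = 0 /\ P p y i1 i1 z = 0).
Proof.
move=> h; rewrite /as_diff_next ordS2; split.
  move=> H y z; have Z := Pr_eq0 h H.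
  by split; apply: Z; rewrite /= !mkE.
move=> H; apply: Pr0 => x /=; rewrite (state_mk x) !mkE.
have [h1 h2] := H (x v1) (x v4).
by case: (I2P (x v2)) h1 h2 => ->; case: (I2P (x v3)) => -> //= h1 h2 _;
  rewrite ?h1 ?h2.
Qed.

Lemma equal_v3_iff p : (forall x, 0 <= p x) ->
  as_equal_next p v3 <-> (forall y z : 'I_2, P p y z i0 i1 = 0 /\ P p y z i1 i0 = 0).
Proof.
move=> h; rewrite /as_equal_next ordS3; split.
  move=> H y z; have Z := Pr_eq0 h H.
  by split; apply: Z; rewrite /= !mkE.
move=> H; apply: Pr0 => x /=; rewrite (state_mk x) !mkE.
have [h1 h2] := H (x v1) (x v2).
by case: (I2P (x v3)) h1 h2 => ->; case: (I2P (x v4)) => -> //= h1 h2 _;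
  rewrite ?h1 ?h2.
Qed.

Lemma diff_v3_iff p : (forall x, 0 <= p x) ->
  as_diff_next p v3 <-> (forall y z : 'I_2, P p y z i0 i0 = 0 /\ P p y z i1 i1 = 0).
Proof.
move=> h; rewrite /as_diff_next ordS3; split.
  move=> H y z; have Z := Pr_eq0 h H.
  by split; apply: Z; rewrite /= !mkE.
move=> H; apply: Pr0 => x /=; rewrite (state_mk x) !mkE.
have [h1 h2] := H (x v1) (x v2).
by case: (I2P (x v3)) h1 h2 => ->; case: (I2P (x v4)) => -> //= h1 h2 _;
  rewrite ?h1 ?h2.
Qed.

Lemma equal_v4_iff p : (forall x, 0 <= p x) ->
  as_equal_next p v4 <-> (forall y z : 'I_2, P p i1 y z i0 = 0 /\ P p i0 y z i1 = 0).
Proof.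
move=> h; rewrite /as_equal_next ordS4; split.
  move=> H y z; have Z := Pr_eq0 h H.
  by split; apply: Z; rewrite /= !mkE.
move=> H; apply: Pr0 => x /=; rewrite (state_mk x) !mkE.
have [h1 h2] := H (x v2) (x v3).
by case: (I2P (x v4)) h1 h2 => ->; case: (I2P (x v1)) => -> //= h1 h2 _;
  rewrite ?h1 ?h2.
Qed.

Lemma diff_v4_iff p : (forall x, 0 <= p x) ->
  as_diff_next p v4 <-> (forall y z : 'I_2, P p i0 y z i0 = 0 /\ P p i1 y z i1 = 0).
Proof.
move=> h; rewrite /as_diff_next ordS4; split.
  move=> H y z; have Z := Pr_eq0 h H.
  by split; apply: Z; rewrite /= !mkE.
move=> H; apply: Pr0 => x /=; rewrite (state_mk x) !mkE.
have [h1 h2] := H (x v2) (x v3).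
by case: (I2P (x v4)) h1 h2 => ->; case: (I2P (x v1)) => -> //= h1 h2 _;
  rewrite ?h1 ?h2.
Qed.

Lemma model_det (q : state -> R) : in_model_C4 q -> forall a b, det1 q a b /\ det2 q a b.
Proof.
case=> _ [_ [f12 [f23 [f34 [f14 H]]]]] a b.
by rewrite /det1 /det2 /P !H !mkE; split; ring.
Qed.

Lemma prod_close (x1 x2 y1 y2 : R) : 0 <= x1 <= 1 -> 0 <= y2 <= 1 ->
  `|x1 * y1 - x2 * y2| <= `|y1 - y2| + `|x1 - x2|.
Proof.
move=> /andP[h1 h1'] /andP[h2 h2'].
have -> : x1 * y1 - x2 * y2 = x1 * (y1 - y2) + (x1 - x2) * y2 by ring.
apply: (le_trans (ler_normD _ _)); rewrite !normrM (ger0_norm h1) (ger0_norm h2).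
apply: lerD.
  rewrite -[X in _ <= X]mul1r; apply: ler_wpM2r => //.
rewrite -[X in _ <= X]mulr1; apply: ler_wpM2l => //.
Qed.

Lemma limit_eq p (x1 x2 x3 x4 : state) : is_distr p -> in_closure_model_C4 p ->
  (forall q : state -> R, in_model_C4 q -> q x1 * q x2 = q x3 * q x4) ->
  p x1 * p x2 = p x3 * p x4.
Proof.
move=> hd hc hq; apply/eqP; rewrite -subr_eq0; apply/negPn/negP => hne.
set d := `|p x1 * p x2 - p x3 * p x4|.
have dp : 0 < d by rewrite normr_gt0.
have [q [qm qc]] := hc (d / 4) ltac:(by rewrite divr_gt0).
have qd : is_distr q by case: qm.
have e := hq q qm.
have b : forall x, p x <= 1 := fun x => le_sum1 x hd.
have bq : forall x, q x <= 1 := fun x => le_sum1 x qd.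
have n0 : forall x, 0 <= p x := fun x => proj1 hd x.
have nq : forall x, 0 <= q x := fun x => proj1 qd x.
have c1 : `|p x1 * p x2 - q x1 * q x2| <= `|p x2 - q x2| + `|p x1 - q x1|.
  by apply: prod_close; apply/andP; split.
have c2 : `|p x3 * p x4 - q x3 * q x4| <= `|p x4 - q x4| + `|p x3 - q x3|.
  by apply: prod_close; apply/andP; split.
have : d <= `|p x1 * p x2 - q x1 * q x2| + `|p x3 * p x4 - q x3 * q x4|.
  rewrite /d; have -> : p x1 * p x2 - p x3 * p x4 =
     (p x1 * p x2 - q x1 * q x2) - (p x3 * p x4 - q x3 * q x4) by rewrite e; ring.
  exact: ler_normB.
have := qc x1; have := qc x2; have := qc x3; have := qc x4. lra.
Qed.

Lemma closure_det p : is_distr p -> in_closure_model_C4 p ->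
  forall a b, det1 p a b /\ det2 p a b.
Proof.
move=> hd hc a b; split; apply: limit_eq => // q qm; by have [] := model_det qm a b.
Qed.

Lemma deg_det p : is_distr p ->
  (exists i : 'I_4, as_equal_next p i) \/ (exists i : 'I_4, as_diff_next p i) ->
  forall a b, det1 p a b /\ det2 p a b.
Proof.
case=> h _ H a b; rewrite /det1 /det2.
case: H => [[i]|[i]]; case: (I4P i) => [->|[->|[->|->]]].
- by move/(equal_v1_iff h) => Z; split; case: (I2P a) => ->; case: (I2P b) => ->;
   rewrite ?(proj1 (Z _ _)) ?(proj2 (Z _ _)) ?mulr0 ?mul0r.
- by move/(equal_v2_iff h) => Z; split; case: (I2P a) => ->; case: (I2P b) => ->;
   rewrite ?(proj1 (Z _ _)) ?(proj2 (Z _ _)) ?mulr0 ?mul0r.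
- by move/(equal_v3_iff h) => Z; split; case: (I2P a) => ->; case: (I2P b) => ->;
   rewrite ?(proj1 (Z _ _)) ?(proj2 (Z _ _)) ?mulr0 ?mul0r.
- by move/(equal_v4_iff h) => Z; split; case: (I2P a) => ->; case: (I2P b) => ->;
   rewrite ?(proj1 (Z _ _)) ?(proj2 (Z _ _)) ?mulr0 ?mul0r.
- by move/(diff_v1_iff h) => Z; split; case: (I2P a) => ->; case: (I2P b) => ->;
   rewrite ?(proj1 (Z _ _)) ?(proj2 (Z _ _)) ?mulr0 ?mul0r.
- by move/(diff_v2_iff h) => Z; split; case: (I2P a) => ->; case: (I2P b) => ->;
   rewrite ?(proj1 (Z _ _)) ?(proj2 (Z _ _)) ?mulr0 ?mul0r.
- by move/(diff_v3_iff h) => Z; split; case: (I2P a) => ->; case: (I2P b) => ->;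
   rewrite ?(proj1 (Z _ _)) ?(proj2 (Z _ _)) ?mulr0 ?mul0r.
- by move/(diff_v4_iff h) => Z; split; case: (I2P a) => ->; case: (I2P b) => ->;
   rewrite ?(proj1 (Z _ _)) ?(proj2 (Z _ _)) ?mulr0 ?mul0r.
Qed.

End S4.


Section S5.
Variable R : realType.
Implicit Types p : state -> R.

Lemma rank1_gen (M : 'I_2 -> 'I_2 -> R) :
  M i0 i0 * M i1 i1 = M i0 i1 * M i1 i0 ->
  forall i j k l, M i j * M k l = M i l * M k j.
Proof.
move=> H i j k l.
case: (I2P i) => ->; case: (I2P j) => ->; case: (I2P k) => ->; case: (I2P l) => ->;
  lra.
Qed.

Definition rs (M : 'I_2 -> 'I_2 -> R) i := M i i0 + M i i1.
Definition cs (M : 'I_2 -> 'I_2 -> R) j :=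
  (M i0 j + M i1 j) / (M i0 i0 + M i0 i1 + M i1 i0 + M i1 i1).

Lemma rank1_fact (M : 'I_2 -> 'I_2 -> R) : (forall i j, 0 <= M i j) ->
  M i0 i0 * M i1 i1 = M i0 i1 * M i1 i0 ->
  forall i j, M i j = rs M i * cs M j.
Proof.
move=> h H i j; rewrite /rs /cs.
have := h i0 i0; have := h i0 i1; have := h i1 i0; have := h i1 i1 => h11 h10 h01 h00.
have [T0|Tp] := eqVneq (M i0 i0 + M i0 i1 + M i1 i0 + M i1 i1) 0.
  have [z1 [z2 [z3 z4]]] : M i0 i0 = 0 /\ M i0 i1 = 0 /\ M i1 i0 = 0 /\ M i1 i1 = 0.
    by move/eqP: T0; lra.
  by case: (I2P i) => ->; case: (I2P j) => ->; rewrite z1 z2 z3 z4 !add0r !mul0r.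
by case: (I2P i) => ->; case: (I2P j) => ->; rewrite mulrA; apply/(canRL (mulfK Tp));
  lra.
Qed.

Lemma rs_ge0 (M : 'I_2 -> 'I_2 -> R) i : (forall i j, 0 <= M i j) -> 0 <= rs M i.
Proof. by move=> h; rewrite /rs addr_ge0. Qed.
Lemma cs_ge0 (M : 'I_2 -> 'I_2 -> R) j : (forall i j, 0 <= M i j) -> 0 <= cs M j.
Proof. by move=> h; rewrite /cs divr_ge0 ?addr_ge0. Qed.

Lemma fact_closure p (f12 f23 f34 f14 : 'I_2 -> 'I_2 -> R) : is_distr p ->
  (forall a b, 0 <= f12 a b) -> (forall a b, 0 <= f23 a b) ->
  (forall a b, 0 <= f34 a b) -> (forall a b, 0 <= f14 a b) ->
  (forall y1 y2 y3 y4, P p y1 y2 y3 y4 = f12 y1 y2 * f23 y2 y3 * f34 y3 y4 * f14 y1 y4) ->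
  in_closure_model_C4 p.
Proof.
move=> hd g1 g2 g3 g4 H.
apply: (@closure_weights _ f12 f23 f34 f14 (fun _ _ => 0%N) (fun _ _ => 0%N)
   (fun _ _ => 0%N) (fun _ _ => 0%N) 0%N) => // x.
by rewrite /Mw /Cw /= (state_mk x) -/(P p _ _ _ _) H !mkE.
Qed.

Lemma caseI p s1 s3 : is_distr p ->
  (forall a b, det1 p a b) -> (forall a b, det2 p a b) ->
  (forall y2 y4, 0 < P p s1 y2 s3 y4) -> in_closure_model_C4 p.
Proof.
move=> hd D1 D2 pos.
have h : forall x, 0 <= p x by case: hd.
pose M x1 := fun y2 y4 => P p x1 y2 s3 y4.
pose N x3 := fun y2 y4 => P p s1 y2 x3 y4.
have hM : forall x1 i j, 0 <= M x1 i j by move=> *; apply: h.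
have hN : forall x3 i j, 0 <= N x3 i j by move=> *; apply: h.
have fM : forall x1 i j, M x1 i j = rs (M x1) i * cs (M x1) j.
  by move=> x1; apply: rank1_fact => //; apply: D2.
have fN : forall x3 i j, N x3 i j = rs (N x3) i * cs (N x3) j.
  by move=> x3; apply: rank1_fact => //; apply: D2.
have Np : forall i j, 0 < rs (N s3) i /\ 0 < cs (N s3) j.
  move=> i j; have := pos i j; rewrite -/(N s3 i j) fN => hp.
  have := rs_ge0 i (hN s3); have := cs_ge0 j (hN s3).
  rewrite !le0r => /orP[/eqP e|c] /orP[/eqP e'|r].
  - by move: hp; rewrite e mulr0 ltxx.
  - by move: hp; rewrite e mulr0 ltxx.
  - by move: hp; rewrite e' mul0r ltxx.
  - by [].
apply: (@fact_closure p (fun x1 x2 => rs (M x1) x2)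
   (fun x2 x3 => rs (N x3) x2 / rs (N s3) x2)
   (fun x3 x4 => cs (N x3) x4 / cs (N s3) x4)
   (fun x1 x4 => cs (M x1) x4)) => //.
- by move=> a b; apply: rs_ge0 (hM a).
- by move=> a b; apply: divr_ge0; [exact: rs_ge0 (hN b)|exact: ltW (proj1 (Np a a))].
- by move=> a b; apply: divr_ge0; [exact: cs_ge0 (hN a)|exact: ltW (proj2 (Np b b))].
- by move=> a b; apply: cs_ge0 (hM a).
move=> y1 y2 y3 y4.
have e1 : P p y1 y2 y3 y4 * P p s1 y2 s3 y4 = P p y1 y2 s3 y4 * P p s1 y2 y3 y4.
  exact: (rank1_gen (M := fun u v => P p u y2 v y4) (D1 y2 y4)).
have [r0 c0] := Np y2 y4.
have e2 : P p y1 y2 y3 y4 = P p y1 y2 s3 y4 * P p s1 y2 y3 y4 / P p s1 y2 s3 y4.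
  by rewrite -e1 mulfK // gt_eqF.
rewrite e2 -/(M y1 y2 y4) -/(N y3 y2 y4) -/(N s3 y2 y4) fM fN (fN s3).
field; rewrite !gt_eqF //.
Qed.


Lemma caseI' p s2 s4 : is_distr p ->
  (forall a b, det1 p a b) -> (forall a b, det2 p a b) ->
  (forall y1 y3, 0 < P p y1 s2 y3 s4) -> in_closure_model_C4 p.
Proof.
move=> hd D1 D2 pos.
have h : forall x, 0 <= p x by case: hd.
pose A x2 := fun y1 y3 => P p y1 x2 y3 s4.
pose B x4 := fun y1 y3 => P p y1 s2 y3 x4.
have hA : forall x2 i j, 0 <= A x2 i j by move=> *; apply: h.
have hB : forall x4 i j, 0 <= B x4 i j by move=> *; apply: h.
have fA : forall x2 i j, A x2 i j = rs (A x2) i * cs (A x2) j.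
  by move=> x2; apply: rank1_fact => //; apply: D1.
have fB : forall x4 i j, B x4 i j = rs (B x4) i * cs (B x4) j.
  by move=> x4; apply: rank1_fact => //; apply: D1.
have Bp : forall i j, 0 < rs (B s4) i /\ 0 < cs (B s4) j.
  move=> i j; have := pos i j; rewrite -/(B s4 i j) fB => hp.
  have := rs_ge0 i (hB s4); have := cs_ge0 j (hB s4).
  rewrite !le0r => /orP[/eqP e|c] /orP[/eqP e'|r].
  - by move: hp; rewrite e mulr0 ltxx.
  - by move: hp; rewrite e mulr0 ltxx.
  - by move: hp; rewrite e' mul0r ltxx.
  - by [].
apply: (@fact_closure p (fun x1 x2 => rs (A x2) x1)
   (fun x2 x3 => cs (A x2) x3)
   (fun x3 x4 => cs (B x4) x3 / cs (B s4) x3)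
   (fun x1 x4 => rs (B x4) x1 / rs (B s4) x1)) => //.
- by move=> a b; apply: rs_ge0 (hA b).
- by move=> a b; apply: cs_ge0 (hA a).
- by move=> a b; apply: divr_ge0; [exact: cs_ge0 (hB b)|exact: ltW (proj2 (Bp a a))].
- by move=> a b; apply: divr_ge0; [exact: rs_ge0 (hB b)|exact: ltW (proj1 (Bp a a))].
move=> y1 y2 y3 y4.
have e1 : P p y1 y2 y3 y4 * P p y1 s2 y3 s4 = P p y1 y2 y3 s4 * P p y1 s2 y3 y4.
  exact: (rank1_gen (M := fun u v => P p y1 u y3 v) (D2 y1 y3)).
have [r0 c0] := Bp y1 y3.
have e2 : P p y1 y2 y3 y4 = P p y1 y2 y3 s4 * P p y1 s2 y3 y4 / P p y1 s2 y3 s4.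
  by rewrite -e1 mulfK // gt_eqF.
rewrite e2 -/(A y2 y1 y3) -/(B y4 y1 y3) -/(B s4 y1 y3) fA fB (fB s4).
field; rewrite !gt_eqF //.
Qed.

End S5.


Section S6.
Variable R : realType.
Implicit Types p : state -> R.

Lemma code_row p y1 y3 : (forall x, 0 <= p x) -> det2 p y1 y3 ->
  ~ (forall y2 y4, 0 < P p y1 y2 y3 y4) ->
  P p y1 i0 y3 i0 * P p y1 i1 y3 i1 = 0 /\ P p y1 i0 y3 i1 * P p y1 i1 y3 i0 = 0.
Proof.
move=> h D N; rewrite /det2 in D.
have e : P p y1 i0 y3 i0 * P p y1 i1 y3 i1 = 0.
  have [//|ne] := eqVneq (P p y1 i0 y3 i0 * P p y1 i1 y3 i1) 0; exfalso; apply: N.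
  have := h (mk y1 i0 y3 i0); have := h (mk y1 i1 y3 i1).
  have := h (mk y1 i0 y3 i1); have := h (mk y1 i1 y3 i0).
  rewrite -!/(P p _ _ _ _) => a1 a2 a3 a4.
  have q1 : 0 < P p y1 i0 y3 i0 * P p y1 i1 y3 i1 by rewrite lt0r ne mulr_ge0.
  have q2 : 0 < P p y1 i0 y3 i1 * P p y1 i1 y3 i0 by rewrite -D.
  have [b1 b2] : 0 < P p y1 i0 y3 i0 /\ 0 < P p y1 i1 y3 i1.
    by split; rewrite lt0r ?a1 ?a2 ?a3 ?a4 andbT; apply/eqP => z; move: q1; rewrite z ?mul0r ?mulr0 ltxx.
  have [b3 b4] : 0 < P p y1 i0 y3 i1 /\ 0 < P p y1 i1 y3 i0.
    by split; rewrite lt0r ?a1 ?a2 ?a3 ?a4 andbT; apply/eqP => z; move: q2; rewrite z ?mul0r ?mulr0 ltxx.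
  by move=> y2 y4; case: (I2P y2) => ->; case: (I2P y4) => ->.
by split => //; rewrite -D.
Qed.

Lemma code_col p y2 y4 : (forall x, 0 <= p x) -> det1 p y2 y4 ->
  ~ (forall y1 y3, 0 < P p y1 y2 y3 y4) ->
  P p i0 y2 i0 y4 * P p i1 y2 i1 y4 = 0 /\ P p i0 y2 i1 y4 * P p i1 y2 i0 y4 = 0.
Proof.
move=> h D N; rewrite /det1 in D.
have e : P p i0 y2 i0 y4 * P p i1 y2 i1 y4 = 0.
  have [//|ne] := eqVneq (P p i0 y2 i0 y4 * P p i1 y2 i1 y4) 0; exfalso; apply: N.
  have := h (mk i0 y2 i0 y4); have := h (mk i1 y2 i1 y4).
  have := h (mk i0 y2 i1 y4); have := h (mk i1 y2 i0 y4).
  rewrite -!/(P p _ _ _ _) => a1 a2 a3 a4.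
  have q1 : 0 < P p i0 y2 i0 y4 * P p i1 y2 i1 y4 by rewrite lt0r ne mulr_ge0.
  have q2 : 0 < P p i0 y2 i1 y4 * P p i1 y2 i0 y4 by rewrite -D.
  have [b1 b2] : 0 < P p i0 y2 i0 y4 /\ 0 < P p i1 y2 i1 y4.
    by split; rewrite lt0r ?a1 ?a2 ?a3 ?a4 andbT; apply/eqP => z; move: q1; rewrite z ?mul0r ?mulr0 ltxx.
  have [b3 b4] : 0 < P p i0 y2 i1 y4 /\ 0 < P p i1 y2 i0 y4.
    by split; rewrite lt0r ?a1 ?a2 ?a3 ?a4 andbT; apply/eqP => z; move: q2; rewrite z ?mul0r ?mulr0 ltxx.
  by move=> y1 y3; case: (I2P y1) => ->; case: (I2P y3) => ->.
by split => //; rewrite -D.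
Qed.

Lemma caseII p : is_distr p ->
  (forall a b, det1 p a b) -> (forall a b, det2 p a b) ->
  (forall s1 s3, ~ (forall y2 y4, 0 < P p s1 y2 s3 y4)) ->
  (forall s2 s4, ~ (forall y1 y3, 0 < P p y1 s2 y3 s4)) ->
  (forall i, ~ as_equal_next p i) -> (forall i, ~ as_diff_next p i) ->
  in_closure_model_C4 p.
Proof.
move=> hd D1 D2 NR NC NE ND.
have h : forall x, 0 <= p x by case: hd.
have rowc : forall y1 y3, P p y1 i0 y3 i0 * P p y1 i1 y3 i1 = 0 /\ P p y1 i0 y3 i1 * P p y1 i1 y3 i0 = 0.
  by move=> y1 y3; apply: code_row.
have colc : forall y2 y4, P p i0 y2 i0 y4 * P p i1 y2 i1 y4 = 0 /\ P p i0 y2 i1 y4 * P p i1 y2 i0 y4 = 0.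
  by move=> y2 y4; apply: code_col.
have H0 : (P p i0 i0 i0 i0 = 0 /\ P p i1 i1 i1 i1 = 0) \/ (P p i0 i1 i0 i1 = 0 /\ P p i1 i0 i1 i0 = 0).
  have e : (P p i0 i0 i0 i0 + P p i1 i1 i1 i1) * (P p i0 i1 i0 i1 + P p i1 i0 i1 i0) = 0.
    rewrite mulrDl !mulrDr.
    have [r1 r2] := rowc i0 i0; have [r3 r4] := rowc i1 i1.
    have [c1 c2] := colc i0 i0; have [c3 c4] := colc i1 i1.
    rewrite /P in r1 r2 r3 r4 c1 c2 c3 c4 *; lra.
  have := h (mk i0 i0 i0 i0); have := h (mk i1 i1 i1 i1).
  have := h (mk i0 i1 i0 i1); have := h (mk i1 i0 i1 i0).
  rewrite /P in e *; move: e => /eqP; rewrite mulf_eq0 => /orP[/eqP e|/eqP e] *; [left|right]; lra.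

have H1 : (P p i0 i0 i0 i1 = 0 /\ P p i1 i1 i1 i0 = 0) \/ (P p i0 i1 i0 i0 = 0 /\ P p i1 i0 i1 i1 = 0).
  have e : (P p i0 i0 i0 i1 + P p i1 i1 i1 i0) * (P p i0 i1 i0 i0 + P p i1 i0 i1 i1) = 0.
    rewrite mulrDl !mulrDr.
    have [r1 r2] := rowc i0 i0; have [r3 r4] := rowc i1 i1.
    have [c1 c2] := colc i0 i1; have [c3 c4] := colc i1 i0.
    rewrite /P in r1 r2 r3 r4 c1 c2 c3 c4 *; lra.
  have := h (mk i0 i0 i0 i1); have := h (mk i1 i1 i1 i0).
  have := h (mk i0 i1 i0 i0); have := h (mk i1 i0 i1 i1).
  rewrite /P in e *; move: e => /eqP; rewrite mulf_eq0 => /orP[/eqP e|/eqP e] *; [left|right]; lra.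

have H2 : (P p i0 i0 i1 i0 = 0 /\ P p i1 i1 i0 i1 = 0) \/ (P p i0 i1 i1 i1 = 0 /\ P p i1 i0 i0 i0 = 0).
  have e : (P p i0 i0 i1 i0 + P p i1 i1 i0 i1) * (P p i0 i1 i1 i1 + P p i1 i0 i0 i0) = 0.
    rewrite mulrDl !mulrDr.
    have [r1 r2] := rowc i0 i1; have [r3 r4] := rowc i1 i0.
    have [c1 c2] := colc i0 i0; have [c3 c4] := colc i1 i1.
    rewrite /P in r1 r2 r3 r4 c1 c2 c3 c4 *; lra.
  have := h (mk i0 i0 i1 i0); have := h (mk i1 i1 i0 i1).
  have := h (mk i0 i1 i1 i1); have := h (mk i1 i0 i0 i0).
  rewrite /P in e *; move: e => /eqP; rewrite mulf_eq0 => /orP[/eqP e|/eqP e] *; [left|right]; lra.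

have H3 : (P p i0 i0 i1 i1 = 0 /\ P p i1 i1 i0 i0 = 0) \/ (P p i0 i1 i1 i0 = 0 /\ P p i1 i0 i0 i1 = 0).
  have e : (P p i0 i0 i1 i1 + P p i1 i1 i0 i0) * (P p i0 i1 i1 i0 + P p i1 i0 i0 i1) = 0.
    rewrite mulrDl !mulrDr.
    have [r1 r2] := rowc i0 i1; have [r3 r4] := rowc i1 i0.
    have [c1 c2] := colc i0 i1; have [c3 c4] := colc i1 i0.
    rewrite /P in r1 r2 r3 r4 c1 c2 c3 c4 *; lra.
  have := h (mk i0 i0 i1 i1); have := h (mk i1 i1 i0 i0).
  have := h (mk i0 i1 i1 i0); have := h (mk i1 i0 i0 i1).
  rewrite /P in e *; move: e => /eqP; rewrite mulf_eq0 => /orP[/eqP e|/eqP e] *; [left|right]; lra.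

move: H0 H1 H2 H3; rewrite /P; move=> [[z0 z1]|[z0 z1]] [[z2 z3]|[z2 z3]] [[z4 z5]|[z4 z5]] [[z6 z7]|[z6 z7]].
-
  exfalso; apply: (ND v1); apply/(diff_v1_iff h) => y w.
  by case: (I2P y) => ->; case: (I2P w) => ->; split; rewrite /P ?z0 ?z1 ?z2 ?z3 ?z4 ?z5 ?z6 ?z7.
-
  apply: (@closure_weights _ (fun a b : 'I_2 => if (a == i1) && (b == i1) then p (mk i1 i1 i0 i0) else (if (a == i0) && (b == i0) then p (mk i0 i0 i1 i1) else (1))) (fun a b : 'I_2 => if (a == i0) && (b == i0) then p (mk i1 i0 i0 i0) else (if (a == i1) && (b == i1) then p (mk i0 i1 i1 i1) else (1))) (fun a b : 'I_2 => if (a == i1) && (b == i0) then p (mk i1 i0 i1 i0) else (if (a == i0) && (b == i1) then p (mk i0 i1 i0 i1) else (1))) (fun a b : 'I_2 => if (a == i1) && (b == i1) then p (mk i1 i0 i1 i1) else (if (a == i0) && (b == i0) then p (mk i0 i1 i0 i0) else (1)))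
    (fun a b : 'I_2 => nat_of_bool (a == b)) (fun a b : 'I_2 => nat_of_bool (a == b)) (fun a b : 'I_2 => nat_of_bool (a != b)) (fun a b : 'I_2 => nat_of_bool (a == b)) 1%N) => //.
  + by move=> a b; case: (I2P a) => ->; case: (I2P b) => -> /=; rewrite ?ler01 ?h.
  + by move=> a b; case: (I2P a) => ->; case: (I2P b) => -> /=; rewrite ?ler01 ?h.
  + by move=> a b; case: (I2P a) => ->; case: (I2P b) => -> /=; rewrite ?ler01 ?h.
  + by move=> a b; case: (I2P a) => ->; case: (I2P b) => -> /=; rewrite ?ler01 ?h.
  + by move=> x; rewrite /Mw; case: (I2P (x v1)) => ->; case: (I2P (x v2)) => ->;
      case: (I2P (x v3)) => ->; case: (I2P (x v4)) => ->.
  + move=> x; rewrite (state_mk x) /Mw /Cw !mkE.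
    by case: (I2P (x v1)) => ->; case: (I2P (x v2)) => ->;
      case: (I2P (x v3)) => ->; case: (I2P (x v4)) => -> /=;
      rewrite ?mulr1 ?mul1r ?z0 ?z1 ?z2 ?z3 ?z4 ?z5 ?z6 ?z7.
-
  apply: (@closure_weights _ (fun a b : 'I_2 => if (a == i1) && (b == i1) then p (mk i1 i1 i0 i1) else (if (a == i0) && (b == i0) then p (mk i0 i0 i1 i0) else (1))) (fun a b : 'I_2 => if (a == i0) && (b == i0) then p (mk i1 i0 i0 i1) else (if (a == i1) && (b == i1) then p (mk i0 i1 i1 i0) else (1))) (fun a b : 'I_2 => if (a == i1) && (b == i1) then p (mk i1 i0 i1 i1) else (if (a == i0) && (b == i0) then p (mk i0 i1 i0 i0) else (1))) (fun a b : 'I_2 => if (a == i1) && (b == i0) then p (mk i1 i0 i1 i0) else (if (a == i0) && (b == i1) then p (mk i0 i1 i0 i1) else (1)))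
    (fun a b : 'I_2 => nat_of_bool (a == b)) (fun a b : 'I_2 => nat_of_bool (a == b)) (fun a b : 'I_2 => nat_of_bool (a == b)) (fun a b : 'I_2 => nat_of_bool (a != b)) 1%N) => //.
  + by move=> a b; case: (I2P a) => ->; case: (I2P b) => -> /=; rewrite ?ler01 ?h.
  + by move=> a b; case: (I2P a) => ->; case: (I2P b) => -> /=; rewrite ?ler01 ?h.
  + by move=> a b; case: (I2P a) => ->; case: (I2P b) => -> /=; rewrite ?ler01 ?h.
  + by move=> a b; case: (I2P a) => ->; case: (I2P b) => -> /=; rewrite ?ler01 ?h.
  + by move=> x; rewrite /Mw; case: (I2P (x v1)) => ->; case: (I2P (x v2)) => ->;
      case: (I2P (x v3)) => ->; case: (I2P (x v4)) => ->.
  + move=> x; rewrite (state_mk x) /Mw /Cw !mkE.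
    by case: (I2P (x v1)) => ->; case: (I2P (x v2)) => ->;
      case: (I2P (x v3)) => ->; case: (I2P (x v4)) => -> /=;
      rewrite ?mulr1 ?mul1r ?z0 ?z1 ?z2 ?z3 ?z4 ?z5 ?z6 ?z7.
-
  exfalso; apply: (ND v2); apply/(diff_v2_iff h) => y w.
  by case: (I2P y) => ->; case: (I2P w) => ->; split; rewrite /P ?z0 ?z1 ?z2 ?z3 ?z4 ?z5 ?z6 ?z7.
-
  apply: (@closure_weights _ (fun a b : 'I_2 => if (a == i1) && (b == i1) then p (mk i1 i1 i1 i0) else (if (a == i0) && (b == i0) then p (mk i0 i0 i0 i1) else (1))) (fun a b : 'I_2 => if (a == i0) && (b == i1) then p (mk i1 i0 i1 i0) else (if (a == i1) && (b == i0) then p (mk i0 i1 i0 i1) else (1))) (fun a b : 'I_2 => if (a == i0) && (b == i0) then p (mk i1 i0 i0 i0) else (if (a == i1) && (b == i1) then p (mk i0 i1 i1 i1) else (1))) (fun a b : 'I_2 => if (a == i1) && (b == i1) then p (mk i1 i0 i0 i1) else (if (a == i0) && (b == i0) then p (mk i0 i1 i1 i0) else (1)))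
    (fun a b : 'I_2 => nat_of_bool (a == b)) (fun a b : 'I_2 => nat_of_bool (a != b)) (fun a b : 'I_2 => nat_of_bool (a == b)) (fun a b : 'I_2 => nat_of_bool (a == b)) 1%N) => //.
  + by move=> a b; case: (I2P a) => ->; case: (I2P b) => -> /=; rewrite ?ler01 ?h.
  + by move=> a b; case: (I2P a) => ->; case: (I2P b) => -> /=; rewrite ?ler01 ?h.
  + by move=> a b; case: (I2P a) => ->; case: (I2P b) => -> /=; rewrite ?ler01 ?h.
  + by move=> a b; case: (I2P a) => ->; case: (I2P b) => -> /=; rewrite ?ler01 ?h.
  + by move=> x; rewrite /Mw; case: (I2P (x v1)) => ->; case: (I2P (x v2)) => ->;
      case: (I2P (x v3)) => ->; case: (I2P (x v4)) => ->.
  + move=> x; rewrite (state_mk x) /Mw /Cw !mkE.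
    by case: (I2P (x v1)) => ->; case: (I2P (x v2)) => ->;
      case: (I2P (x v3)) => ->; case: (I2P (x v4)) => -> /=;
      rewrite ?mulr1 ?mul1r ?z0 ?z1 ?z2 ?z3 ?z4 ?z5 ?z6 ?z7.
-
  exfalso; apply: (ND v4); apply/(diff_v4_iff h) => y w.
  by case: (I2P y) => ->; case: (I2P w) => ->; split; rewrite /P ?z0 ?z1 ?z2 ?z3 ?z4 ?z5 ?z6 ?z7.
-
  exfalso; apply: (ND v3); apply/(diff_v3_iff h) => y w.
  by case: (I2P y) => ->; case: (I2P w) => ->; split; rewrite /P ?z0 ?z1 ?z2 ?z3 ?z4 ?z5 ?z6 ?z7.
-
  apply: (@closure_weights _ (fun a b : 'I_2 => if (a == i1) && (b == i0) then p (mk i1 i0 i1 i0) else (if (a == i0) && (b == i1) then p (mk i0 i1 i0 i1) else (1))) (fun a b : 'I_2 => if (a == i1) && (b == i1) then p (mk i1 i1 i1 i0) else (if (a == i0) && (b == i0) then p (mk i0 i0 i0 i1) else (1))) (fun a b : 'I_2 => if (a == i0) && (b == i0) then p (mk i1 i1 i0 i0) else (if (a == i1) && (b == i1) then p (mk i0 i0 i1 i1) else (1))) (fun a b : 'I_2 => if (a == i1) && (b == i1) then p (mk i1 i1 i0 i1) else (if (a == i0) && (b == i0) then p (mk i0 i0 i1 i0) else (1)))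
    (fun a b : 'I_2 => nat_of_bool (a != b)) (fun a b : 'I_2 => nat_of_bool (a == b)) (fun a b : 'I_2 => nat_of_bool (a == b)) (fun a b : 'I_2 => nat_of_bool (a == b)) 1%N) => //.
  + by move=> a b; case: (I2P a) => ->; case: (I2P b) => -> /=; rewrite ?ler01 ?h.
  + by move=> a b; case: (I2P a) => ->; case: (I2P b) => -> /=; rewrite ?ler01 ?h.
  + by move=> a b; case: (I2P a) => ->; case: (I2P b) => -> /=; rewrite ?ler01 ?h.
  + by move=> a b; case: (I2P a) => ->; case: (I2P b) => -> /=; rewrite ?ler01 ?h.
  + by move=> x; rewrite /Mw; case: (I2P (x v1)) => ->; case: (I2P (x v2)) => ->;
      case: (I2P (x v3)) => ->; case: (I2P (x v4)) => ->.
  + move=> x; rewrite (state_mk x) /Mw /Cw !mkE.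
    by case: (I2P (x v1)) => ->; case: (I2P (x v2)) => ->;
      case: (I2P (x v3)) => ->; case: (I2P (x v4)) => -> /=;
      rewrite ?mulr1 ?mul1r ?z0 ?z1 ?z2 ?z3 ?z4 ?z5 ?z6 ?z7.
-
  apply: (@closure_weights _ (fun a b : 'I_2 => if (a == i1) && (b == i1) then p (mk i1 i1 i1 i1) else (if (a == i0) && (b == i0) then p (mk i0 i0 i0 i0) else (1))) (fun a b : 'I_2 => if (a == i0) && (b == i1) then p (mk i1 i0 i1 i1) else (if (a == i1) && (b == i0) then p (mk i0 i1 i0 i0) else (1))) (fun a b : 'I_2 => if (a == i0) && (b == i1) then p (mk i1 i0 i0 i1) else (if (a == i1) && (b == i0) then p (mk i0 i1 i1 i0) else (1))) (fun a b : 'I_2 => if (a == i1) && (b == i0) then p (mk i1 i0 i0 i0) else (if (a == i0) && (b == i1) then p (mk i0 i1 i1 i1) else (1)))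
    (fun a b : 'I_2 => nat_of_bool (a == b)) (fun a b : 'I_2 => nat_of_bool (a != b)) (fun a b : 'I_2 => nat_of_bool (a != b)) (fun a b : 'I_2 => nat_of_bool (a != b)) 1%N) => //.
  + by move=> a b; case: (I2P a) => ->; case: (I2P b) => -> /=; rewrite ?ler01 ?h.
  + by move=> a b; case: (I2P a) => ->; case: (I2P b) => -> /=; rewrite ?ler01 ?h.
  + by move=> a b; case: (I2P a) => ->; case: (I2P b) => -> /=; rewrite ?ler01 ?h.
  + by move=> a b; case: (I2P a) => ->; case: (I2P b) => -> /=; rewrite ?ler01 ?h.
  + by move=> x; rewrite /Mw; case: (I2P (x v1)) => ->; case: (I2P (x v2)) => ->;
      case: (I2P (x v3)) => ->; case: (I2P (x v4)) => ->.
  + move=> x; rewrite (state_mk x) /Mw /Cw !mkE.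
    by case: (I2P (x v1)) => ->; case: (I2P (x v2)) => ->;
      case: (I2P (x v3)) => ->; case: (I2P (x v4)) => -> /=;
      rewrite ?mulr1 ?mul1r ?z0 ?z1 ?z2 ?z3 ?z4 ?z5 ?z6 ?z7.
-
  exfalso; apply: (NE v3); apply/(equal_v3_iff h) => y w.
  by case: (I2P y) => ->; case: (I2P w) => ->; split; rewrite /P ?z0 ?z1 ?z2 ?z3 ?z4 ?z5 ?z6 ?z7.
-
  exfalso; apply: (NE v4); apply/(equal_v4_iff h) => y w.
  by case: (I2P y) => ->; case: (I2P w) => ->; split; rewrite /P ?z0 ?z1 ?z2 ?z3 ?z4 ?z5 ?z6 ?z7.
-
  apply: (@closure_weights _ (fun a b : 'I_2 => if (a == i1) && (b == i0) then p (mk i1 i0 i1 i1) else (if (a == i0) && (b == i1) then p (mk i0 i1 i0 i0) else (1))) (fun a b : 'I_2 => if (a == i1) && (b == i1) then p (mk i1 i1 i1 i1) else (if (a == i0) && (b == i0) then p (mk i0 i0 i0 i0) else (1))) (fun a b : 'I_2 => if (a == i0) && (b == i1) then p (mk i1 i1 i0 i1) else (if (a == i1) && (b == i0) then p (mk i0 i0 i1 i0) else (1))) (fun a b : 'I_2 => if (a == i1) && (b == i0) then p (mk i1 i1 i0 i0) else (if (a == i0) && (b == i1) then p (mk i0 i0 i1 i1) else (1)))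
    (fun a b : 'I_2 => nat_of_bool (a != b)) (fun a b : 'I_2 => nat_of_bool (a == b)) (fun a b : 'I_2 => nat_of_bool (a != b)) (fun a b : 'I_2 => nat_of_bool (a != b)) 1%N) => //.
  + by move=> a b; case: (I2P a) => ->; case: (I2P b) => -> /=; rewrite ?ler01 ?h.
  + by move=> a b; case: (I2P a) => ->; case: (I2P b) => -> /=; rewrite ?ler01 ?h.
  + by move=> a b; case: (I2P a) => ->; case: (I2P b) => -> /=; rewrite ?ler01 ?h.
  + by move=> a b; case: (I2P a) => ->; case: (I2P b) => -> /=; rewrite ?ler01 ?h.
  + by move=> x; rewrite /Mw; case: (I2P (x v1)) => ->; case: (I2P (x v2)) => ->;
      case: (I2P (x v3)) => ->; case: (I2P (x v4)) => ->.
  + move=> x; rewrite (state_mk x) /Mw /Cw !mkE.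
    by case: (I2P (x v1)) => ->; case: (I2P (x v2)) => ->;
      case: (I2P (x v3)) => ->; case: (I2P (x v4)) => -> /=;
      rewrite ?mulr1 ?mul1r ?z0 ?z1 ?z2 ?z3 ?z4 ?z5 ?z6 ?z7.
-
  exfalso; apply: (NE v2); apply/(equal_v2_iff h) => y w.
  by case: (I2P y) => ->; case: (I2P w) => ->; split; rewrite /P ?z0 ?z1 ?z2 ?z3 ?z4 ?z5 ?z6 ?z7.
-
  apply: (@closure_weights _ (fun a b : 'I_2 => if (a == i1) && (b == i0) then p (mk i1 i0 i0 i0) else (if (a == i0) && (b == i1) then p (mk i0 i1 i1 i1) else (1))) (fun a b : 'I_2 => if (a == i1) && (b == i0) then p (mk i1 i1 i0 i0) else (if (a == i0) && (b == i1) then p (mk i0 i0 i1 i1) else (1))) (fun a b : 'I_2 => if (a == i1) && (b == i0) then p (mk i1 i1 i1 i0) else (if (a == i0) && (b == i1) then p (mk i0 i0 i0 i1) else (1))) (fun a b : 'I_2 => if (a == i1) && (b == i1) then p (mk i1 i1 i1 i1) else (if (a == i0) && (b == i0) then p (mk i0 i0 i0 i0) else (1)))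
    (fun a b : 'I_2 => nat_of_bool (a != b)) (fun a b : 'I_2 => nat_of_bool (a != b)) (fun a b : 'I_2 => nat_of_bool (a != b)) (fun a b : 'I_2 => nat_of_bool (a == b)) 1%N) => //.
  + by move=> a b; case: (I2P a) => ->; case: (I2P b) => -> /=; rewrite ?ler01 ?h.
  + by move=> a b; case: (I2P a) => ->; case: (I2P b) => -> /=; rewrite ?ler01 ?h.
  + by move=> a b; case: (I2P a) => ->; case: (I2P b) => -> /=; rewrite ?ler01 ?h.
  + by move=> a b; case: (I2P a) => ->; case: (I2P b) => -> /=; rewrite ?ler01 ?h.
  + by move=> x; rewrite /Mw; case: (I2P (x v1)) => ->; case: (I2P (x v2)) => ->;
      case: (I2P (x v3)) => ->; case: (I2P (x v4)) => ->.
  + move=> x; rewrite (state_mk x) /Mw /Cw !mkE.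
    by case: (I2P (x v1)) => ->; case: (I2P (x v2)) => ->;
      case: (I2P (x v3)) => ->; case: (I2P (x v4)) => -> /=;
      rewrite ?mulr1 ?mul1r ?z0 ?z1 ?z2 ?z3 ?z4 ?z5 ?z6 ?z7.
-
  apply: (@closure_weights _ (fun a b : 'I_2 => if (a == i1) && (b == i0) then p (mk i1 i0 i0 i1) else (if (a == i0) && (b == i1) then p (mk i0 i1 i1 i0) else (1))) (fun a b : 'I_2 => if (a == i1) && (b == i0) then p (mk i1 i1 i0 i1) else (if (a == i0) && (b == i1) then p (mk i0 i0 i1 i0) else (1))) (fun a b : 'I_2 => if (a == i1) && (b == i1) then p (mk i1 i1 i1 i1) else (if (a == i0) && (b == i0) then p (mk i0 i0 i0 i0) else (1))) (fun a b : 'I_2 => if (a == i1) && (b == i0) then p (mk i1 i1 i1 i0) else (if (a == i0) && (b == i1) then p (mk i0 i0 i0 i1) else (1)))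
    (fun a b : 'I_2 => nat_of_bool (a != b)) (fun a b : 'I_2 => nat_of_bool (a != b)) (fun a b : 'I_2 => nat_of_bool (a == b)) (fun a b : 'I_2 => nat_of_bool (a != b)) 1%N) => //.
  + by move=> a b; case: (I2P a) => ->; case: (I2P b) => -> /=; rewrite ?ler01 ?h.
  + by move=> a b; case: (I2P a) => ->; case: (I2P b) => -> /=; rewrite ?ler01 ?h.
  + by move=> a b; case: (I2P a) => ->; case: (I2P b) => -> /=; rewrite ?ler01 ?h.
  + by move=> a b; case: (I2P a) => ->; case: (I2P b) => -> /=; rewrite ?ler01 ?h.
  + by move=> x; rewrite /Mw; case: (I2P (x v1)) => ->; case: (I2P (x v2)) => ->;
      case: (I2P (x v3)) => ->; case: (I2P (x v4)) => ->.
  + move=> x; rewrite (state_mk x) /Mw /Cw !mkE.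
    by case: (I2P (x v1)) => ->; case: (I2P (x v2)) => ->;
      case: (I2P (x v3)) => ->; case: (I2P (x v4)) => -> /=;
      rewrite ?mulr1 ?mul1r ?z0 ?z1 ?z2 ?z3 ?z4 ?z5 ?z6 ?z7.
-
  exfalso; apply: (NE v1); apply/(equal_v1_iff h) => y w.
  by case: (I2P y) => ->; case: (I2P w) => ->; split; rewrite /P ?z0 ?z1 ?z2 ?z3 ?z4 ?z5 ?z6 ?z7.
Qed.

End S6.

Unset Implicit Arguments.

Theorem proposition1p1 (R : realType) (p : state -> R) :
  is_distr p ->
  (cond_indep p v1 v3 v2 v4 /\ cond_indep p v2 v4 v1 v3 <->
   in_closure_model_C4 p \/
   (exists i : 'I_4, as_equal_next p i) \/
   (exists i : 'I_4, as_diff_next p i)).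
Proof.
move=> hd; have h : forall x, 0 <= p x by case: hd.
split.
  move=> [C1 C2].
  have D1 := (CI1_det h).1 C1; have D2 := (CI2_det h).1 C2.
  case: (classic (exists i : 'I_4, as_equal_next p i)) => [E|NE]; first by right; left.
  case: (classic (exists i : 'I_4, as_diff_next p i)) => [E|ND]; first by right; right.
  left.
  have NE' : forall i, ~ as_equal_next p i by move=> i Ei; apply: NE; exists i.
  have ND' : forall i, ~ as_diff_next p i by move=> i Ei; apply: ND; exists i.
  case: (classic (exists s1 s3, forall y2 y4, 0 < P p s1 y2 s3 y4)) => [[s1 [s3 H]]|NR].
    exact: (caseI hd D1 D2 H).
  case: (classic (exists s2 s4, forall y1 y3, 0 < P p y1 s2 y3 s4)) => [[s2 [s4 H]]|NC].
    exact: (caseI' hd D1 D2 H).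
  apply: (caseII hd D1 D2 _ _ NE' ND').
    by move=> s1 s3 H; apply: NR; exists s1, s3.
  by move=> s2 s4 H; apply: NC; exists s2, s4.
move=> H.
have D : forall a b, det1 p a b /\ det2 p a b.
  case: H => [Hc|Hd]; first exact: closure_det.
  exact: deg_det.
split; [apply/(CI1_det h) | apply/(CI2_det h)] => a b; by case: (D a b).
Qed.
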